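(* Let $\mathcal G$ be a graph on $n$ vertices in which every vertex has the same degree $r$, and let $\mathcal C\subseteq\{0,1\}^n$ be a binary code with $|\mathcal C|\ge 2$. Then the distance of the CWS code $\mathcal Q=(\mathcal G,\mathcal C)$ is at most $r+1$.
   Context: A Pauli operator on $n$ qubits is, up to a phase, $X^{\mathbf v}Z^{\mathbf u}=X_1^{v_1}\cdots X_n^{v_n}Z_1^{u_1}\cdots Z_n^{u_n}$ with $\mathbf v,\mathbf u\in\{0,1\}^n$; its weight is the number of qubits on which it acts as a non-identity operator. For a subspace $\mathcal Q\subseteq(\mathbb C^2)^{\otimes n}$ with orthonormal basis $\{|i\rangle\}$, a Pauli operator $E$ is detectable if $\langle j|E|i\rangle=C_E\delta_{ij}$ for all $i,j$, with $C_E$ independent of $i,j$; the distance of $\mathcal Q$ is the smallest weight of a non-detectable Pauli operator. Let $\mathcal G$ be a simple graph on vertex set $\{1,\dots,n\}$ with adjacency matrix $R\in\{0,1\}^{n\times n}$ (symmetric, zero diagonal) and rows $\mathbf r_i$. The graph-stabilizer generators are $S_i=X_iZ^{\mathbf r_i}$, $i=1,\dots,n$; they commute, generate an abelian group $\mathscr S_{\mathcal G}$, and stabilize a unique (up to phase) state $|s\rangle$, the graph state. For a binary code $\mathcal C\subseteq\{0,1\}^n$ with $K$ words, the CWS code in standard form is $\mathcal Q=(\mathcal G,\mathcal C)=\operatorname{span}\{Z^{\mathbf c}|s\rangle:\mathbf c\in\mathcal C\}$; it has dimension $K$. *)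

(* Defs.v *)
From HB Require Import structures.
From mathcomp Require Import all_boot all_order all_algebra all_field.
Set Implicit Arguments. Unset Strict Implicit. Unset Printing Implicit Defensive.
Import Order.TTheory GRing.Theory Num.Theory.
Local Open Scope ring_scope.

Definition bits (n : nat) := {ffun 'I_n -> bool}.

(* vectors of (C^2)^{(x)n}: coefficients in the computational basis |x> *)
Definition state (n : nat) := bits n -> algC.

Definition bzero n : bits n := [ffun => false].
Definition bxor n (x y : bits n) : bits n := [ffun k => x k (+) y k].
Definition bdot n (u x : bits n) : bool := odd #|[set k | u k && x k]|.
Definition sgn (b : bool) : algC := (-1) ^+ b.

(* X^v Z^u : Z^u|x> = (-1)^{u.x}|x>,  X^v|x> = |x+v> *)
Definition pauli n (v u : bits n) (psi : state n) : state n :=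
  fun y => sgn (bdot u (bxor y v)) * psi (bxor y v).

Definition weight n (v u : bits n) : nat := #|[set k | v k || u k]|.

Definition inner n (phi psi : state n) : algC :=
  \sum_(x : bits n) (Num.conj (phi x)) * psi x.

(* graph given by a symmetric irreflexive relation e on the vertices;
   r_i is the i-th row of the adjacency matrix *)
Definition unitv n (i : 'I_n) : bits n := [ffun k => k == i].
Definition adjrow n (e : rel 'I_n) (i : 'I_n) : bits n := [ffun k => e i k].

Definition graph_stab n (e : rel 'I_n) (i : 'I_n) : state n -> state n :=
  pauli (unitv i) (adjrow e i).

(* s is (a phase representative of) the graph state: normalized and
   stabilized by all S_i *)
Definition is_graph_state n (e : rel 'I_n) (s : state n) : Prop :=
  inner s s = 1 /\ forall i y, graph_stab e i s y = s y.

Definition zop n (c : bits n) (psi : state n) : state n := pauli (bzero n) c psi.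

Definition in_cws n (C : {set bits n}) (s : state n) (psi : state n) : Prop :=
  exists a : bits n -> algC, forall y, psi y = \sum_(c in C) a c * zop c s y.

Definition in_span n K (b : 'I_K -> state n) (psi : state n) : Prop :=
  exists a : 'I_K -> algC, forall y, psi y = \sum_(i < K) a i * b i y.

Definition cws_onb n (C : {set bits n}) (s : state n) K (b : 'I_K -> state n) : Prop :=
  [/\ forall i j, inner (b i) (b j) = (i == j)%:R,
      forall i, in_cws C s (b i)
    & forall c, c \in C -> in_span b (zop c s)].

Definition detectable n K (b : 'I_K -> state n) (v u : bits n) : Prop :=
  exists CE : algC, forall i j, inner (b j) (pauli v u (b i)) = CE * (i == j)%:R.

(* Main.v *)
Require Import Defs.
From HB Require Import structures.
From mathcomp Require Import all_boot all_order all_algebra all_field.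
From mathcomp Require Import ring.
Import GRing.Theory Num.Theory.

Section H.
Local Open Scope ring_scope.

Lemma sgn_bdot n (u x : bits n) : sgn (bdot u x) = \prod_k sgn (u k && x k).
Proof.
rewrite /sgn /bdot signr_odd -prodr_const big_mkcond /=.
apply: eq_bigr => k _; rewrite inE; by case: (u k && x k).
Qed.

Lemma sgn_bdotD n (u x y : bits n) :
  sgn (bdot u (bxor x y)) = sgn (bdot u x) * sgn (bdot u y).
Proof.
rewrite !sgn_bdot -big_split; apply: eq_bigr => k _; rewrite ffunE.
by case: (u k); case: (x k); case: (y k); rewrite /sgn /= ?expr0 ?expr1 ?mulr1 ?mul1r ?mulrNN ?mulr1.
Qed.

Lemma sgn_unit n (c : bits n) i : sgn (bdot c (unitv i)) = sgn (c i).
Proof.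
rewrite sgn_bdot (bigD1 i) //= ffunE eqxx andbT big1 ?mulr1 // => k hk.
by rewrite ffunE (negPf hk) andbF.
Qed.

Lemma sgn_sq b : Num.conj (sgn b) * sgn b = 1.
Proof. by case: b; rewrite /sgn /= ?expr0 ?expr1 ?conjCN1 ?rmorph1 ?mulr1 ?mulrNN ?mulr1. Qed.

Lemma bxor0 n (w : bits n) : bxor w (bzero n) = w.
Proof. by apply/ffunP => k; rewrite !ffunE addbF. Qed.

Lemma delta_sum K (F : 'I_K -> algC) j : \sum_i F i * (i == j)%:R = F j.
Proof.
rewrite (bigD1 j) //= eqxx mulr1 big1 ?addr0 // => i hi.
by rewrite (negPf hi) mulr0.
Qed.

Lemma inner_span n K (f g : 'I_K -> state n) (a d : 'I_K -> algC) :
  inner (fun x => \sum_j a j * f j x) (fun x => \sum_i d i * g i x) =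
  \sum_j \sum_i Num.conj (a j) * d i * inner (f j) (g i).
Proof.
rewrite /inner.
under eq_bigr => x _ do rewrite rmorph_sum mulr_suml.
rewrite exchange_big; apply: eq_bigr => j _.
under eq_bigr => x _ do rewrite mulr_sumr.
rewrite exchange_big; apply: eq_bigr => i _.
rewrite mulr_sumr; apply: eq_bigr => x _.
rewrite rmorphM /=; ring.
Qed.

Lemma inner_ext n (f f' g g' : state n) :
  (forall x, f x = f' x) -> (forall x, g x = g' x) -> inner f g = inner f' g'.
Proof. by move=> hf hg; rewrite /inner; apply: eq_bigr => x _; rewrite hf hg. Qed.

End H.

(* distance <= r+1  <=>  some non-detectable Pauli operator has weight <= r+1 *)
Theorem corollary1 (n r : nat) (e : rel 'I_n)
    (e_sym : symmetric e) (e_irr : irreflexive e)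
    (e_reg : forall i : 'I_n, #|[set j | e i j]| = r)
    (C : {set bits n}) (hC : 2 <= #|C|)
    (s : state n) (hs : is_graph_state e s)
    (K : nat) (b : 'I_K -> state n) (hb : cws_onb C s b) :
  exists v u : bits n, weight v u <= r.+1 /\ ~ detectable b v u.
Proof.
case/card_gt1P: hC => c [c' [hc hc' hneq]].
have [i hi] : exists i, c i != c' i.
  apply/existsP; apply: contraR hneq => /existsPn H.
  by apply/eqP/ffunP => k; apply/eqP/negbNE/H.
exists (unitv i), (adjrow e i); split.
  rewrite /weight.
  have -> : [set k | unitv i k || adjrow e i k] = i |: [set j | e i j].
    by apply/setP => k; rewrite !inE !ffunE.
  by rewrite cardsU1 inE e_irr e_reg.
case=> CE hCE.
case: hs => hss hstab.
case: hb => hortho _ hspan.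
have key : forall c, c \in C -> CE = sgn (c i).
  move=> d hd.
  case: (hspan d hd) => a ha.
  set psi := zop d s.
  have hE : forall y, pauli (unitv i) (adjrow e i) psi y = (sgn (d i) * psi y)%R.
    move=> y; rewrite /psi /zop /pauli !bxor0 [sgn (bdot d _)]sgn_bdotD -sgn_unit.
    have := hstab i y; rewrite /graph_stab /pauli => <-.
    ring.
  have hlin : forall y, pauli (unitv i) (adjrow e i) psi y =
      (\sum_j a j * pauli (unitv i) (adjrow e i) (b j) y)%R.
    move=> y; rewrite {1}/pauli /psi ha mulr_sumr; apply: eq_bigr => j _.
    by rewrite /pauli; ring.
  have hpp : inner psi psi = 1%R.
    rewrite -hss /inner; apply: eq_bigr => x _.
    rewrite /psi /zop /pauli bxor0 rmorphM /=.
    by rewrite mulrACA sgn_sq mul1r.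
  have h1 : inner psi (pauli (unitv i) (adjrow e i) psi) = sgn (d i).
    rewrite -[RHS]mulr1 -hpp /inner mulr_sumr; apply: eq_bigr => x _.
    by rewrite hE mulrCA.
  have h2 : inner psi (pauli (unitv i) (adjrow e i) psi) = (CE * inner psi psi)%R.
    rewrite (inner_ext _ _ _ _ _ ha hlin) inner_span.
    rewrite (inner_ext _ _ _ _ _ ha ha) inner_span mulr_sumr.
    apply: eq_bigr => j _.
    under eq_bigr => k _ do rewrite hCE.
    under [in RHS]eq_bigr => k _ do rewrite hortho.
    rewrite mulr_sumr; apply: eq_bigr => k _.
    by rewrite (eq_sym j k); ring.
  by rewrite -h1 h2 hpp mulr1.
have := key c hc; rewrite (key c' hc').
move: hi; case: (c i); case: (c' i) => //= _; rewrite /sgn /= ?expr0 ?expr1 => /eqP.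
- by rewrite -subr_eq0 opprK (_ : (1 + 1 = 2%:R)%R) // pnatr_eq0.
- by rewrite eq_sym -subr_eq0 opprK (_ : (1 + 1 = 2%:R)%R) // pnatr_eq0.
Qed.
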